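(* Let ${\bf a}=(a_1,\dots,a_n)\in(\mathbb C^* )^n$ and $ev_{\bf a}:\mathfrak{OA}\to\bigoplus^n\mathfrak{sl}_2$, $X\mapsto(ev_{a_1}(X),\dots,ev_{a_n}(X))$. Then $\ker(ev_{\bf a})=\mathfrak I_{U_{\bf a}(t)}$. Moreover $ev_{\bf a}$ is surjective if and only if $a_j\neq\pm1$ for all $j$ and $a_j\neq a_k^{\pm1}$ for all $j\neq k$.
   Context: Work over $\mathbb C$. $\mathfrak{sl}_2$ has basis $e,f,h$ with $[e,f]=h$, $[h,e]=2e$, $[h,f]=-2f$. The Onsager algebra is the Lie subalgebra $\mathfrak{OA}=\{p(t)e+p(t^{-1})f+q(t)h:\ p,q\in\mathbb C[t,t^{-1}],\ q(t^{-1})=-q(t)\}$ of the loop algebra $\mathbb C[t,t^{-1}]\otimes\mathfrak{sl}_2$. For $a\in\mathbb C^*$, $ev_a:\mathfrak{OA}\to\mathfrak{sl}_2$, $p(t)x\mapsto p(a)x$; $U_a(t)=t^2-(a+a^{-1})t+1$ if $a^2\neq1$ and $U_a(t)=t-a$ if $a=\pm1$ (note $U_a=U_{a^{-1}}$). $U_{\bf a}(t)$ is the product of the distinct polynomials among $U_{a_1}(t),\dots,U_{a_n}(t)$. For a reciprocal polynomial $P$ (nonconstant monic with $P(t)=\pm t^{\deg P}P(t^{-1})$), $\mathfrak I_{P(t)}=\{p(t)e+p(t^{-1})f+q(t)h\in\mathfrak{OA}:\ p(t),q(t)\in P(t)\mathbb C[t,t^{-1}]\}$. *)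

(* Defs.v *)
From HB Require Import structures.
From mathcomp Require Import all_boot all_algebra.
From mathcomp Require Import reals complex.
Set Implicit Arguments. Unset Strict Implicit. Unset Printing Implicit Defensive.
Import GRing.Theory Num.Theory.
Local Open Scope ring_scope.

Section Onsager.
Variable F : fieldType.

(* Laurent polynomials: the pair (P, k) represents t^{-k} * P(t) in F[t,t^{-1}].
   Two pairs represent the same Laurent polynomial iff [lequiv] holds. *)
Definition laurent := ({poly F} * nat)%type.

Definition lequiv (p q : laurent) : Prop := p.1 * 'X^(q.2) = q.1 * 'X^(p.2).

Definition lopp (p : laurent) : laurent := (- p.1, p.2).

(* p(t) |-> p(t^{-1}):  t^{-k} sum_i c_i t^i  |->  t^{-s} sum_{i<s} c_i t^{k+s-i}, s = size P *)
Definition lrefl (p : laurent) : laurent :=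
  (\sum_(i < size p.1) p.1`_i *: 'X^(p.2 + size p.1 - i), size p.1).

Definition leval (p : laurent) (a : F) : F := p.1.[a] / a ^+ p.2.

Definition ldvd (P : {poly F}) (p : laurent) : Prop :=
  exists q : laurent, lequiv p (P * q.1, q.2).

(* sl2 elements: (x_e, x_f, x_h) stands for x_e e + x_f f + x_h h. *)
Definition sl2 := (F * F * F)%type.

(* An element of the loop algebra of the form p(t) e + p(t^{-1}) f + q(t) h is
   encoded by the pair (p, q). *)
Definition onsager := (laurent * laurent)%type.

Definition in_OA (X : onsager) : Prop := lequiv (lrefl X.2) (lopp X.2).

Definition ev (a : F) (X : onsager) : sl2 :=
  (leval X.1 a, leval (lrefl X.1) a, leval X.2 a).

Definition in_ideal (P : {poly F}) (X : onsager) : Prop :=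
  in_OA X /\ ldvd P X.1 /\ ldvd P X.2.

Definition Upoly (a : F) : {poly F} :=
  if a ^+ 2 != 1 then 'X^2 - (a + a^-1) *: 'X + 1 else 'X - a%:P.

Definition Ubold (n : nat) (a : 'I_n -> F) : {poly F} :=
  \prod_(u <- undup [seq Upoly (a i) | i <- enum 'I_n]) u.

End Onsager.

(* Main.v *)
Require Import Defs.
From HB Require Import structures.
From mathcomp Require Import all_boot all_algebra.
From mathcomp Require Import reals complex.
From mathcomp Require Import ring lra.
Import GRing.Theory Num.Theory.
Local Open Scope ring_scope.
Set Implicit Arguments. Unset Strict Implicit. Unset Printing Implicit Defensive.

Section Gen.
Variable F : numFieldType.
Implicit Types (p q : laurent F) (c d x y : F).

Lemma leval_lequiv p q y : y != 0 -> lequiv p q -> leval p y = leval q y.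
Proof.
move=> y0; rewrite /lequiv /leval => /(congr1 (fun P => P.[y])).
rewrite !hornerM !hornerXn => H.
have e1 : p.1.[y] / y ^+ p.2 = p.1.[y] * y ^+ q.2 / (y ^+ p.2 * y ^+ q.2).
  by field; rewrite !expf_neq0.
by rewrite e1 H; field; rewrite !expf_neq0.
Qed.

Lemma leval_opp p y : leval (lopp p) y = - leval p y.
Proof. by rewrite /leval /lopp /= hornerN mulNr. Qed.

Lemma leval_refl p y : y != 0 -> leval (lrefl p) y = leval p y^-1.
Proof.
move=> y0; rewrite /leval /lrefl /= horner_sum (horner_coef p.1) mulr_suml.
rewrite exprVn invrK mulr_suml; apply: eq_bigr => i _.
rewrite hornerZ hornerXn exprVn.
have hi : (i <= size p.1)%N by apply: ltnW.
have -> : (p.2 + size p.1 - i = p.2 + (size p.1 - i))%N by rewrite addnBA.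
rewrite exprD; rewrite -[in y ^+ size p.1](subnK hi) exprD.
field; rewrite ?expf_neq0 //.
Qed.

Lemma lequiv_eval p q : (forall x : F, x != 0 -> leval p x = leval q x) -> lequiv p q.
Proof.
move=> H; rewrite /lequiv; apply/eqP; rewrite -subr_eq0; apply/negPn/negP => D0.
set D := _ - _ in D0.
set rs := [seq (i.+1)%:R : F | i <- iota 0 (size D)].
suff [h1 h2] : all (root D) rs /\ uniq rs.
  by have := max_poly_roots D0 h1 h2; rewrite size_map size_iota ltnn.
split.
  apply/allP => x /mapP [i _ ->]; set z := _%:R.
  have z0 : z != 0 by rewrite pnatr_eq0.
  rewrite /root /D hornerD hornerN !hornerM !hornerXn.
  have := H z z0; rewrite /leval => e.
  have -> : p.1.[z] = q.1.[z] / z ^+ q.2 * z ^+ p.2.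
    by rewrite -e divfK // expf_neq0.
  by apply/eqP; field; exact: expf_neq0.
rewrite /rs map_inj_uniq ?iota_uniq // => i j /eqP; by rewrite eqr_nat eqSS => /eqP.
Qed.


Lemma inv_sq1 (c : F) : c ^+ 2 = 1 -> c^-1 = c.
Proof.
move=> h; have c0 : c != 0.
  by apply/eqP => c0; move: h; rewrite c0 expr2 mul0r => /esym /eqP; rewrite oner_eq0.
by rewrite -[c^-1]mulr1 -h expr2 mulrA mulVf ?mul1r.
Qed.

Lemma Upoly_fact c : c != 0 -> c ^+ 2 != 1 -> Upoly c = ('X - c%:P) * ('X - (c^-1)%:P).
Proof.
move=> c0 hc; rewrite /Upoly hc -mul_polyC polyCD.
have h : (c%:P * (c^-1)%:P : {poly F}) = 1 by rewrite -polyCM mulfV.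
rewrite -h; ring.
Qed.

Lemma Upoly_inv c : Upoly c^-1 = Upoly c.
Proof.
rewrite /Upoly exprVn invr_eq1; case: ifP => h; first by rewrite invrK [c^-1 + c]addrC.
by rewrite inv_sq1 //; apply/eqP; rewrite (negbFE h).
Qed.

Lemma rootU c x : c != 0 -> root (Upoly c) x = (x == c) || (x == c^-1).
Proof.
move=> c0; case: (boolP (c ^+ 2 == 1)) => h.
  by rewrite /Upoly h /= root_XsubC (inv_sq1 (eqP h)) orbb.
by rewrite Upoly_fact // rootM !root_XsubC.
Qed.

Lemma Upoly_dvd c P : c != 0 -> root P c -> root P c^-1 -> Upoly c %| P.
Proof.
move=> c0; case: (boolP (c ^+ 2 == 1)) => h.
  by rewrite /Upoly h /= => r1 _; rewrite dvdp_XsubCl.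
rewrite Upoly_fact // => r1 r2.
have := uniq_roots_dvdp (rs := [:: c; c^-1]) (p := P).
rewrite big_cons big_seq1; apply; first by rewrite /= r1 r2.
rewrite uniq_rootsE /= inE andbT.
apply/eqP => e; have e2 : c ^+ 2 = 1 by rewrite expr2 {2}e mulfV.
by rewrite e2 eqxx in h.
Qed.

Lemma Upoly_eq c d x : c != 0 -> d != 0 -> root (Upoly c) x -> root (Upoly d) x ->
  Upoly c = Upoly d.
Proof.
have key : forall e : F, e != 0 -> root (Upoly e) x -> Upoly e = Upoly x.
  move=> e e0; rewrite rootU // => /orP [] /eqP ->; first reflexivity.
  rewrite Upoly_inv; reflexivity.
move=> c0 d0 rc rd; rewrite (key c c0 rc) (key d d0 rd); reflexivity.
Qed.

Lemma prodU_dvd (s : seq {poly F}) P : uniq s ->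
  (forall u, u \in s -> exists2 c, c != 0 & u = Upoly c) ->
  (forall u x, u \in s -> root u x -> root P x) -> \prod_(u <- s) u %| P.
Proof.
elim: s P => [|u s IH] P /=; first by rewrite big_nil dvd1p.
case/andP => us us' hU hR; rewrite big_cons.
have [c c0 ec] := hU u (mem_head _ _).
have : u %| P.
  have hr : forall x, root u x -> root P x := fun x => hR u x (mem_head _ _).
  rewrite ec in hr *; apply: Upoly_dvd => //; apply: hr; rewrite rootU //; apply/orP; [left|right]; exact: eqxx.
case/dvdpP => P' eP; rewrite eP [P' * u]mulrC.
apply: dvdp_mul; first exact: dvdpp.
apply: IH => //; first by move=> v vs; apply: hU; rewrite inE vs orbT.
move=> v x vs rvx.
have := hR v x; rewrite inE vs orbT => /(_ isT rvx).
rewrite eP rootM => /orP [] // rux; exfalso.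
have vs' : v \in u :: s by rewrite inE vs orbT.
have [d d0 ed] := hU v vs'.
have euv : u = v.
  rewrite ec ed in rux rvx *; exact: (Upoly_eq c0 d0 rux rvx).
by move: us; rewrite euv vs.
Qed.

Lemma interp (I : finType) (b v : I -> F) : injective b ->
  exists P : {poly F}, forall i, P.[b i] = v i.
Proof.
move=> bi.
pose L i := \prod_(j | j != i) ('X - (b j)%:P).
have Lev : forall i k, (L i).[b k] = \prod_(j | j != i) (b k - b j).
  by move=> i k; rewrite horner_prod; apply: eq_bigr => j _; rewrite hornerXsubC.
have Lnz : forall i, (L i).[b i] != 0.
  move=> i; rewrite Lev; apply/prodf_neq0 => j ji; rewrite subr_eq0 eq_sym.
  by apply: contra ji => /eqP /bi ->.
have L0 : forall i k, i != k -> (L i).[b k] = 0.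
  by move=> i k ik; rewrite Lev (bigD1 k) 1?eq_sym //= subrr mul0r.
exists (\sum_i (v i / (L i).[b i]) *: L i) => k.
rewrite horner_sum (bigD1 k) //= big1 ?addr0.
  by rewrite hornerZ divfK.
by move=> i ik; rewrite hornerZ (L0 i k ik) mulr0.
Qed.

Lemma Ubold_root n (a : 'I_n -> F) j x : a j != 0 -> (x == a j) || (x == (a j)^-1) ->
  root (Ubold a) x.
Proof.
move=> a0 hx; rewrite /Ubold.
have m : Upoly (a j) \in undup [seq Upoly (a i) | i <- enum 'I_n].
  by rewrite mem_undup; apply/mapP; exists j; rewrite ?mem_enum.
by rewrite (big_rem _ m) /= rootM rootU // hx.
Qed.

Lemma Ubold_dvd n (a : 'I_n -> F) P : (forall j, a j != 0) ->
  (forall j, root P (a j) /\ root P (a j)^-1) -> Ubold a %| P.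
Proof.
move=> ha hr; apply: prodU_dvd; first exact: undup_uniq.
  by move=> u; rewrite mem_undup => /mapP [i _ ->]; exists (a i).
move=> u x; rewrite mem_undup => /mapP [i _ ->]; rewrite rootU // => /orP [] /eqP ->;
  by case: (hr i).
Qed.

Lemma leval_root p y : y != 0 -> leval p y = 0 -> root p.1 y.
Proof.
move=> y0; rewrite /leval /root => /eqP.
by rewrite mulf_eq0 invr_eq0 expf_eq0 (negbTE y0) andbF orbF.
Qed.

Lemma ldvd_eval P p y : y != 0 -> ldvd P p -> root P y -> leval p y = 0.
Proof.
by move=> y0 [q hq] r; rewrite (leval_lequiv y0 hq) /leval /= hornerM (rootP r) !mul0r.
Qed.


Definition lsub p q : laurent F := (p.1 * 'X^(q.2) - q.1 * 'X^(p.2), (p.2 + q.2)%N).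

Lemma leval_sub p q x : x != 0 -> leval (lsub p q) x = leval p x - leval q x.
Proof.
move=> x0; rewrite /leval /lsub /= hornerD hornerN !hornerM !hornerXn exprD.
by field; rewrite ?expf_neq0.
Qed.

Lemma leval0 (P : {poly F}) x : leval (P, 0%N) x = P.[x].
Proof. by rewrite /leval expr0 divr1. Qed.

Lemma m1_neq1 : (-1 : F) != 1.
Proof.
apply/eqP => h; have : (2%:R : F) = 0 by rewrite mulr2n -{1}h addNr.
by move/eqP; rewrite pnatr_eq0.
Qed.

End Gen.

Theorem lemma14 (R : realType) (n : nat) (a : 'I_n -> R[i])
    (ha : forall j, a j != 0) :
  (forall X : onsager R[i],
      (in_OA X /\ forall j, ev (a j) X = (0, 0, 0))
      <-> in_ideal (Ubold a) X)
  /\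
  ((forall y : 'I_n -> sl2 R[i],
      exists X : onsager R[i], in_OA X /\ forall j, ev (a j) X = y j)
   <->
   ((forall j, a j != 1 /\ a j != -1) /\
    (forall j k, j != k -> a j != a k /\ a j != (a k)^-1))).
Proof.
have aI : forall j, (a j)^-1 != 0 by move=> j; rewrite invr_eq0.
split.
  move=> X; split.
    case=> hOA hev.
    have e1 : forall j, [/\ leval X.1 (a j) = 0, leval (lrefl X.1) (a j) = 0 &
                          leval X.2 (a j) = 0].
      by move=> j; move: (hev j); rewrite /ev => -[-> -> ->].
    split => //; split.
      have /dvdpP [Q eQ] : Ubold a %| X.1.1.
        apply: Ubold_dvd => // j; have [h1 h2 _] := e1 j; split.
          exact: leval_root (ha j) h1.
        by apply: leval_root (aI j) _; rewrite -leval_refl.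
      exists (Q, X.1.2); rewrite /lequiv eQ; congr (_ * _); exact: mulrC.
    have /dvdpP [Q eQ] : Ubold a %| X.2.1.
      apply: Ubold_dvd => // j; have [_ _ h3] := e1 j; split.
        exact: leval_root (ha j) h3.
      apply: leval_root (aI j) _.
      by rewrite -leval_refl // (leval_lequiv (ha j) hOA) leval_opp h3 oppr0.
    exists (Q, X.2.2); rewrite /lequiv eQ; congr (_ * _); exact: mulrC.
  case=> hOA [h1 h2]; split => // j.
  have r1 : root (Ubold a) (a j) by apply: (Ubold_root (j:=j)) => //; rewrite eqxx.
  have r2 : root (Ubold a) (a j)^-1.
    by apply: (Ubold_root (j:=j)) => //; rewrite eqxx orbT.
  rewrite /ev leval_refl // (ldvd_eval (ha j) h1 r1) (ldvd_eval (aI j) h1 r2).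
  by rewrite (ldvd_eval (ha j) h2 r1).
split.
  move=> S; split.
    move=> j; have [X [hOA hev]] := S (fun _ => ((0,0),1)).
    have h3 : leval X.2 (a j) = 1 by move: (hev j); rewrite /ev => -[_ _ ->].
    have e := leval_lequiv (ha j) hOA.
    rewrite leval_refl // leval_opp h3 in e.
    split; apply/eqP => ej; move: e h3; rewrite ej ?invr1 ?invrN1 => -> h;
      by move: (m1_neq1 R[i]); rewrite h eqxx.
  move=> j k jk.
  pose y := fun i => if i == j then ((1,0),0) else ((0,0),0) : sl2 R[i].
  have [X [hOA hev]] := S y.
  have hj : leval X.1 (a j) = 1 by move: (hev j); rewrite /ev /y eqxx => -[-> _ _].
  have kj : (k == j) = false by rewrite eq_sym; exact: negbTE.
  have [hk1 hk2] : leval X.1 (a k) = 0 /\ leval X.1 (a k)^-1 = 0.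
    by move: (hev k); rewrite /ev /y kj leval_refl // => -[-> -> _].
  split; apply/eqP => e.
    by move: hj; rewrite e hk1 => /esym/eqP; rewrite oner_eq0.
  by move: hj; rewrite e hk2 => /esym/eqP; rewrite oner_eq0.
case=> hpm hd y.
pose b := fun s : 'I_n + 'I_n => match s with inl j => a j | inr j => (a j)^-1 end.
have ne : forall j k, a j != (a k)^-1.
  move=> j k; case: (eqVneq j k) => [<-|jk]; last exact: (hd j k jk).2.
  apply/eqP => e; have : (a j)^+2 == 1 by rewrite expr2 {2}e mulfV.
  by rewrite sqrf_eq1 (negbTE (hpm j).1) (negbTE (hpm j).2).
have aeq : forall j k, a j = a k -> j = k.
  move=> j k e; apply/eqP; apply: contraT => jk.
  by move: ((hd j k jk).1); rewrite e eqxx.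
have bi : injective b.
  move=> [j|j] [k|k]; rewrite /b => e.
  - by rewrite (aeq j k e).
  - by move: (ne j k); rewrite e eqxx.
  - by move: (ne k j); rewrite e eqxx.
  - by rewrite (aeq j k (invr_inj e)).
have [P hP] := interp (fun s => match s with inl j => (y j).1.1 | inr j => (y j).1.2 end) bi.
have [Rp hR] := interp (fun s => match s with inl j => (y j).2 | inr j => 0 end) bi.
pose r := (Rp, 0%N) : laurent R[i].
exists ((P, 0%N), lsub r (lrefl r)); split.
  apply: lequiv_eval => x x0.
  rewrite leval_opp leval_refl // !leval_sub ?invr_eq0 // !leval_refl ?invr_eq0 //.
  by rewrite invrK opprB.
move=> j; have aj := ha j.
rewrite /ev leval_refl // leval_sub // leval_refl // !leval0.
have := hP (inl j); have := hP (inr j); have := hR (inl j); have := hR (inr j).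
rewrite /b => -> -> -> ->; rewrite subr0.
by case: (y j) => [[? ?] ?].
Qed.
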